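(* For every integer $j\geq 2$ and every integer $m\geq 0$ with $(j,m)\notin\{(2,0),(3,0)\}$, \[ \lim_{t\to -1}(1-t^2)^{\frac{j-3}{2}+m}g_j^{(m)}(t)=0,\qquad \lim_{t\to +1}(1-t^2)^{\frac{j-3}{2}+m}g_j^{(m)}(t)=-(j-1)\,2^{m-2}\,\frac{\Gamma\big(\frac{j-3}{2}+m\big)}{\pi^{\frac{j-1}{2}}}. \]
   Context: $\omega_j$ is the surface area of $\mathbb{S}^{j-1}\subseteq\mathbb{R}^j$. The Berg functions $g_j\in C^\infty(-1,1)$, $j\ge2$, are defined by $g_2(t)=\frac{1}{2\pi}(\pi-\arccos t)(1-t^2)^{1/2}-\frac{1}{4\pi}t$, $g_3(t)=\frac{1}{2\pi}\big(1+t\log(1-t)+(\tfrac43-\log 2)t\big)$, $g_{j+2}(t)=\frac{j+1}{2\pi}g_j(t)+\frac{j+1}{2\pi(j-1)}t\,g_j'(t)+\frac{j+1}{2\pi\omega_j}t$. $g_j^{(m)}$ denotes the $m$-th derivative. *)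

(* Defs.v *)
From Stdlib Require Import Reals.
From Coquelicot Require Import Coquelicot.
Open Scope R_scope.

Definition Gamma (s : R) : R :=
  RInt_gen (fun t => Rpower t (s - 1) * exp (- t))
           (at_right 0) (Rbar_locally p_infty).

(* omega_j = surface area of S^{j-1} in R^j = 2 pi^(j/2) / Gamma(j/2). *)
Definition omega (j : nat) : R :=
  2 * Rpower PI (INR j / 2) / Gamma (INR j / 2).

Definition g2 (t : R) : R :=
  1 / (2 * PI) * (PI - acos t) * sqrt (1 - t ^ 2) - 1 / (4 * PI) * t.

Definition g3 (t : R) : R :=
  1 / (2 * PI) * (1 + t * ln (1 - t) + (4 / 3 - ln 2) * t).

(* Berg functions g_j for j >= 2 (g 0, g 1 are irrelevant placeholders):
   g_{j+2} = (j+1)/(2 pi) g_j + (j+1)/(2 pi (j-1)) t g_j' + (j+1)/(2 pi omega_j) t. *)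
Fixpoint berg (j : nat) : R -> R :=
  match j with
  | 0%nat => fun _ => 0
  | 1%nat => fun _ => 0
  | 2%nat => g2
  | 3%nat => g3
  | S (S k as k') =>
      fun t =>
        let J := INR k in
        (J + 1) / (2 * PI) * berg k t
        + (J + 1) / (2 * PI * (J - 1)) * t * Derive (berg k) t
        + (J + 1) / (2 * PI * omega k) * t
  end.

(* Main.v *)
Require Import Defs.
From Stdlib Require Import Reals Lra Lia Factorial FunctionalExtensionality.
From Coquelicot Require Import Coquelicot.
Open Scope R_scope.



Lemma lim_plus {T : Type} {F : (T -> Prop) -> Prop} {FF : Filter F} (f g : T -> R) a b :
  filterlim f F (locally a) -> filterlim g F (locally b) ->
  filterlim (fun x => f x + g x) F (locally (a + b)).
Proof.
  intros Hf Hg. eapply filterlim_comp_2; [exact Hf | exact Hg |].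
  apply (@filterlim_plus R_AbsRing R_NormedModule).
Qed.

Lemma lim_mult {T : Type} {F : (T -> Prop) -> Prop} {FF : Filter F} (f g : T -> R) a b :
  filterlim f F (locally a) -> filterlim g F (locally b) ->
  filterlim (fun x => f x * g x) F (locally (a * b)).
Proof.
  intros Hf Hg. eapply filterlim_comp_2; [exact Hf | exact Hg |].
  apply (@filterlim_mult R_AbsRing).
Qed.

Lemma lim_const {T : Type} {F : (T -> Prop) -> Prop} {FF : Filter F} (c : R) : filterlim (fun _ : T => c) F (locally c).
Proof. apply filterlim_const. Qed.

Lemma lim_opp {T : Type} {F : (T -> Prop) -> Prop} {FF : Filter F} (f : T -> R) a :
  filterlim f F (locally a) -> filterlim (fun x => - f x) F (locally (- a)).
Proof.
  intros Hf. replace (-a) with ((-1) * a) by ring.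
  apply (filterlim_ext (fun x => (-1) * f x)); [intros; ring|].
  apply lim_mult; [apply lim_const|exact Hf].
Qed.

Lemma lim_minus {T : Type} {F : (T -> Prop) -> Prop} {FF : Filter F} (f g : T -> R) a b :
  filterlim f F (locally a) -> filterlim g F (locally b) ->
  filterlim (fun x => f x - g x) F (locally (a - b)).
Proof. intros; apply lim_plus; auto; apply lim_opp; auto. Qed.

Lemma lim_cont {T : Type} {F : (T -> Prop) -> Prop} {FF : Filter F} (h : R -> R) (f : T -> R) a :
  continuous h a -> filterlim f F (locally a) ->
  filterlim (fun x => h (f x)) F (locally (h a)).
Proof. intros Hh Hf. eapply filterlim_comp; eauto. Qed.

Lemma lim_eq {T : Type} {F : (T -> Prop) -> Prop} {FF : Filter F} (f : T -> R) (a b : R) : a = b -> filterlim f F (locally a) -> filterlim f F (locally b).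
Proof. intros ->; auto. Qed.

Lemma lim_pow {T : Type} {F : (T -> Prop) -> Prop} {FF : Filter F} (f : T -> R) a n :
  filterlim f F (locally a) -> filterlim (fun x => f x ^ n) F (locally (a ^ n)).
Proof.
  intros Hf; induction n as [|n IH]; simpl.
  - apply lim_const.
  - apply lim_mult; auto.
Qed.


Lemma lim_id_right a : filterlim (fun t => t) (at_right a) (locally a).
Proof. eapply filterlim_filter_le_1; [apply filter_le_within|apply filterlim_id]. Qed.
Lemma lim_id_left a : filterlim (fun t => t) (at_left a) (locally a).
Proof. eapply filterlim_filter_le_1; [apply filter_le_within|apply filterlim_id]. Qed.

Lemma ev_right_m1 : at_right (-1) (fun t => -1 < t < 1).
Proof.
  exists (mkposreal 1 Rlt_0_1). intros y Hy Hlt. simpl in *.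
  unfold ball in Hy; simpl in Hy; unfold AbsRing_ball, abs, minus, plus, opp in Hy; simpl in Hy.
  apply Rabs_lt_between in Hy. lra.
Qed.
Lemma ev_left_1 : at_left 1 (fun t => -1 < t < 1).
Proof.
  exists (mkposreal 1 Rlt_0_1). intros y Hy Hlt. simpl in *.
  unfold ball in Hy; simpl in Hy; unfold AbsRing_ball, abs, minus, plus, opp in Hy; simpl in Hy.
  apply Rabs_lt_between in Hy. lra.
Qed.

Lemma open_int t : -1 < t < 1 -> locally t (fun s => -1 < s < 1).
Proof.
  intros H. assert (He : 0 < Rmin (t + 1) (1 - t)) by (apply Rmin_glb_lt; lra).
  exists (mkposreal _ He). intros y Hy.
  unfold ball in Hy; simpl in Hy; unfold AbsRing_ball, abs, minus, plus, opp in Hy; simpl in Hy.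
  apply Rabs_lt_between in Hy.
  pose proof (Rmin_l (t+1) (1-t)); pose proof (Rmin_r (t+1) (1-t)). lra.
Qed.

Lemma open_pos t : 0 < t -> locally t (fun s => 0 < s).
Proof.
  intros H. exists (mkposreal _ H). intros y Hy.
  unfold ball in Hy; simpl in Hy; unfold AbsRing_ball, abs, minus, plus, opp in Hy; simpl in Hy.
  apply Rabs_lt_between in Hy. lra.
Qed.

Lemma cont_poly_id : forall x, continuous (fun t : R => t) x.
Proof. intros x; apply filterlim_id. Qed.

Lemma w_right_m1 : filterlim (fun t => 1 - t ^ 2) (at_right (-1)) (at_right 0).
Proof.
  intros P [eps Heps]. unfold filtermap.
  assert (Hc : filterlim (fun t => 1 - t^2) (at_right (-1)) (locally 0)).
  { apply (lim_eq _ (1 - (-1)^2)); [simpl; lra|]. apply lim_minus; [apply lim_const|apply lim_pow, lim_id_right]. }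
  specialize (Hc _ (locally_ball 0 eps)). unfold filtermap in Hc.
  generalize (filter_and _ _ Hc ev_right_m1).
  apply filter_imp. intros t [H1 H2]. apply Heps; auto.
  assert (0 <= t^2 < 1) by (split; [apply pow2_ge_0| nra]). lra.
Qed.
Lemma w_left_1 : filterlim (fun t => 1 - t ^ 2) (at_left 1) (at_right 0).
Proof.
  intros P [eps Heps]. unfold filtermap.
  assert (Hc : filterlim (fun t => 1 - t^2) (at_left 1) (locally 0)).
  { apply (lim_eq _ (1 - 1^2)); [simpl; lra|]. apply lim_minus; [apply lim_const|apply lim_pow, lim_id_left]. }
  specialize (Hc _ (locally_ball 0 eps)). unfold filtermap in Hc.
  generalize (filter_and _ _ Hc ev_left_1).
  apply filter_imp. intros t [H1 H2]. apply Heps; auto.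
  assert (0 <= t^2 < 1) by (split; [apply pow2_ge_0| nra]). lra.
Qed.

Lemma rpow_to0 a : 0 < a -> filterlim (fun x => Rpower x a) (at_right 0) (locally 0).
Proof.
  intros Ha. unfold Rpower.
  eapply filterlim_comp with (G := Rbar_locally m_infty).
  - eapply filterlim_comp with (G := Rbar_locally m_infty); [apply is_lim_ln_0|].
    intros P [M HM]. exists (M / a). intros x Hx. apply HM.
    apply Rmult_lt_reg_l with (/a). apply Rinv_0_lt_compat; lra.
    replace (/ a * (a * x)) with x by (field; lra). unfold Rdiv in Hx. lra.
  - apply is_lim_exp_m.
Qed.

Lemma cont_ex_der (f : R -> R) x : ex_derive f x -> continuous f x.
Proof. intros H. exact (@ex_derive_continuous R_AbsRing R_NormedModule f x H). Qed.
Lemma der_mult (f g : R -> R) x df dg : is_derive f x df -> is_derive g x dg ->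
  is_derive (fun t => f t * g t) x (df * g x + f x * dg).
Proof. intros Hf Hg. apply (is_derive_mult (K:=R_AbsRing) f g x df dg Hf Hg). intros; apply Rmult_comm. Qed.
Lemma der_plus (f g : R -> R) x df dg : is_derive f x df -> is_derive g x dg ->
  is_derive (fun t => f t + g t) x (df + dg).
Proof. intros Hf Hg. apply (is_derive_plus (K:=R_AbsRing) (V:=R_NormedModule) f g x df dg Hf Hg). Qed.
Lemma der_opp (f : R -> R) x df : is_derive f x df -> is_derive (fun t => - f t) x (- df).
Proof. intros Hf. apply (is_derive_opp (K:=R_AbsRing) (V:=R_NormedModule) f x df Hf). Qed.
Lemma der_comp (f g : R -> R) x df dg : is_derive f (g x) df -> is_derive g x dg ->
  is_derive (fun t => f (g t)) x (dg * df).
Proof. intros Hf Hg. apply (is_derive_comp (K:=R_AbsRing) (V:=R_NormedModule) f g x df dg Hf Hg). Qed.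
Lemma der_eq (f : R -> R) (x d1 d2 : R) : d1 = d2 -> is_derive f x d1 -> is_derive f x d2.
Proof. intros ->; auto. Qed.

Lemma ex_RInt_cont (f : R -> R) a b :
  (forall z, Rmin a b <= z <= Rmax a b -> continuous f z) -> ex_RInt f a b.
Proof. exact (@ex_RInt_continuous R_CompleteNormedModule f a b). Qed.

Lemma RInt_scal_R (f : R -> R) a b l : ex_RInt f a b -> RInt (fun x => l * f x) a b = l * RInt f a b.
Proof. intros H. exact (@RInt_scal R_CompleteNormedModule f a b l H). Qed.

Lemma RInt_comp_lin_R (f : R -> R) u v a b : ex_RInt f (u * a + v) (u * b + v) ->
  RInt (fun y => u * f (u * y + v)) a b = RInt f (u * a + v) (u * b + v).
Proof. intros H. exact (@RInt_comp_lin R_CompleteNormedModule f u v a b H). Qed.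


Lemma ln_lt_self y : 0 < y -> ln y < y.
Proof.
  intros Hy. rewrite <- (ln_exp y) at 2. apply ln_increasing; auto.
  destruct (Req_dec y 0) as [->|Hn]; [lra|]. pose proof (exp_ineq1 y Hn). lra.
Qed.

Lemma is_derive_rpow s x : 0 < x -> is_derive (fun t => Rpower t s) x (s * Rpower x (s - 1)).
Proof. intros Hx. apply is_derive_Reals. apply derivable_pt_lim_power; auto. Qed.

Lemma cont_rpow s x : 0 < x -> continuous (fun t => Rpower t s) x.
Proof. intros Hx. apply cont_ex_der. eexists. apply is_derive_rpow; auto. Qed.

Lemma ev_pos_right : at_right 0 (fun a => 0 < a).
Proof. exists (mkposreal 1 Rlt_0_1). intros; auto. Qed.
Lemma ev_pos_inf : Rbar_locally p_infty (fun b => 0 < b).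
Proof. exists 0. intros; auto. Qed.

Lemma lim_inf_rpow_exp s : 0 < s ->
  filterlim (fun t => Rpower t s * exp (- t)) (Rbar_locally p_infty) (locally 0).
Proof.
  intros Hs.
  apply filterlim_ext_loc with (fun t => exp (s * ln t - t)).
  { exists 0. intros t Ht. unfold Rpower. rewrite <- exp_plus. f_equal; ring. }
  eapply filterlim_comp; [|apply is_lim_exp_m].
  intros P [M HM]. exists (Rmax (16 * s * s) (Rmax (- 2 * M) 1)). intros t Ht.
  apply HM.
  pose proof (Rmax_l (16*s*s) (Rmax (-2*M) 1)). pose proof (Rmax_r (16*s*s) (Rmax (-2*M) 1)).
  pose proof (Rmax_l (-2*M) 1). pose proof (Rmax_r (-2*M) 1).
  assert (Ht0 : 0 < t) by lra.
  assert (Hsq : 0 < sqrt t) by (apply sqrt_lt_R0; lra).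
  assert (Hsq2 : sqrt t * sqrt t = t) by (apply sqrt_sqrt; lra).
  assert (H4 : 4 * s < sqrt t).
  { apply Rsqr_incrst_0; unfold Rsqr; try rewrite Hsq2; nra. }
  assert (Hl : ln t = 2 * ln (sqrt t)).
  { rewrite <- Hsq2 at 1. rewrite ln_mult; auto; ring. }
  pose proof (ln_lt_self (sqrt t) Hsq).
  assert (s * ln t < 2 * s * sqrt t) by (rewrite Hl; nra).
  nra.
Qed.

Lemma lim_right_rpow_exp s : 0 < s ->
  filterlim (fun t => Rpower t s * exp (- t)) (at_right 0) (locally 0).
Proof.
  intros Hs. apply (lim_eq _ (0 * exp (- 0))); [simpl; ring|].
  apply lim_mult; [apply rpow_to0; auto|].
  apply (lim_cont (fun t => exp (- t))). 
  - apply cont_ex_der. auto_derive. auto.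
  - apply lim_id_right.
Qed.

Definition gam s t := Rpower t (s - 1) * exp (- t).

Lemma Gamma_is s l : is_RInt_gen (gam s) (at_right 0) (Rbar_locally p_infty) l -> Gamma s = l.
Proof.
  intros H. unfold Gamma. apply (is_RInt_gen_unique (gam s) l H).
Qed.

Lemma prod_pos : filter_prod (at_right 0) (Rbar_locally p_infty)
  (fun ab => forall x, Rmin (fst ab) (snd ab) <= x <= Rmax (fst ab) (snd ab) -> 0 < x).
Proof.
  apply (Filter_prod _ _ _ (fun a => 0 < a) (fun b => 0 < b)); [apply ev_pos_right|apply ev_pos_inf|].
  intros a b Ha Hb x Hx. simpl in Hx. pose proof (Rmin_glb_lt a b 0 Ha Hb). lra.
Qed.

Lemma prod_pos' : filter_prod (at_right 0) (Rbar_locally p_infty)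
  (fun ab => forall x, Rmin (fst ab) (snd ab) < x < Rmax (fst ab) (snd ab) -> 0 < x).
Proof.
  eapply filter_imp; [|apply prod_pos]. intros ab H x Hx. apply H; lra.
Qed.

Lemma gam_rec s l : 0 < s ->
  is_RInt_gen (gam s) (at_right 0) (Rbar_locally p_infty) l ->
  is_RInt_gen (gam (s + 1)) (at_right 0) (Rbar_locally p_infty) (s * l).
Proof.
  intros Hs Hl.
  set (phi := fun t => - (Rpower t s * exp (- t))).
  set (psi := fun t => gam (s + 1) t - s * gam s t).
  assert (Hd : forall x, 0 < x -> is_derive phi x (psi x)).
  { intros x Hx. unfold phi, psi, gam.
    replace (s + 1 - 1) with s by ring.
    eapply der_eq; [|apply der_opp, der_mult; [apply is_derive_rpow; auto|apply (der_comp exp (fun t => - t)); [apply is_derive_exp|apply der_opp; apply (is_derive_id (K:=R_AbsRing))]]].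
    simpl. unfold one; simpl. ring. }
  assert (Hcpsi : forall x, 0 < x -> continuous psi x).
  { intros x Hx. unfold psi, gam. 
    apply (lim_minus (fun t => Rpower t (s+1-1) * exp (- t)) (fun t => s * (Rpower t (s-1) * exp (-t)))).
    - apply lim_mult; [apply cont_rpow; auto|]. apply (cont_ex_der (fun t => exp (- t))); auto_derive; auto.
    - apply lim_mult; [apply lim_const|]. apply lim_mult; [apply cont_rpow; auto|].
      apply (cont_ex_der (fun t => exp (- t))); auto_derive; auto. }
  assert (H1 : is_RInt_gen (Derive phi) (at_right 0) (Rbar_locally p_infty) (0 - 0)).
  { apply is_RInt_gen_Derive.
    - eapply filter_imp; [|apply prod_pos]. intros ab H x Hx. eexists. apply Hd. auto.
    - eapply filter_imp; [|apply prod_pos]. intros ab H x Hx.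
      assert (Hx0 : 0 < x) by auto.
      apply (continuous_ext_loc _ psi). 
      + eapply filter_imp; [|apply open_pos; exact Hx0]. intros y Hy. simpl.
        symmetry; apply is_derive_unique; auto.
      + auto.
    - unfold phi. apply (lim_eq _ (- 0)); [simpl; ring|]. apply lim_opp. apply lim_right_rpow_exp; auto.
    - unfold phi. apply (lim_eq _ (- 0)); [simpl; ring|]. apply lim_opp. apply lim_inf_rpow_exp; auto. }
  assert (H2 := is_RInt_gen_plus _ _ _ _ H1 (is_RInt_gen_scal _ s _ Hl)).
  replace (s * l) with (plus (0 - 0) (scal s l)).
  2:{ unfold plus, scal; simpl; unfold mult; simpl; ring. }
  eapply is_RInt_gen_ext; [|exact H2].
  eapply filter_imp; [|apply prod_pos']. intros ab H x Hx. simpl.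
  rewrite (is_derive_unique _ _ _ (Hd x (H x Hx))). unfold psi, plus, scal; simpl; unfold mult; simpl. ring.
Qed.

Lemma gam1 : is_RInt_gen (gam 1) (at_right 0) (Rbar_locally p_infty) 1.
Proof.
  set (phi := fun t => - exp (- t)).
  assert (Hd : forall x, is_derive phi x (exp (- x))).
  { intros x. unfold phi. auto_derive; auto. ring. }
  assert (H1 : is_RInt_gen (Derive phi) (at_right 0) (Rbar_locally p_infty) (0 - (- 1))).
  { apply is_RInt_gen_Derive.
    - apply filter_forall. intros ab x _. eexists; apply Hd.
    - apply filter_forall. intros ab x _.
      apply (continuous_ext (fun t => exp (- t))).
      + intros y; symmetry; apply is_derive_unique, Hd.
      + apply cont_ex_der; auto_derive; auto.
    - unfold phi. apply (lim_eq _ (- exp (- 0))). { rewrite Ropp_0, exp_0. reflexivity. }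
      apply lim_opp. apply (lim_cont (fun t => exp (- t))).
      + apply cont_ex_der; auto_derive; auto.
      + apply lim_id_right.
    - unfold phi. apply (lim_eq _ (- 0)); [simpl; ring|]. apply lim_opp.
      eapply filterlim_comp; [|apply is_lim_exp_m].
      intros P [M HM]. exists (- M). intros x Hx. apply HM. lra. }
  replace (0 - - 1) with 1 in H1 by ring.
  eapply is_RInt_gen_ext; [|exact H1].
  eapply filter_imp; [|apply prod_pos']. intros ab H x Hx. simpl.
  rewrite (is_derive_unique _ _ _ (Hd x)). unfold gam. replace (1 - 1) with 0 by ring. simpl.
  rewrite Rpower_O; [ring|]. auto.
Qed.

Lemma gam_nat n : is_RInt_gen (gam (INR n + 1)) (at_right 0) (Rbar_locally p_infty) (INR (fact n)).
Proof.
  induction n as [|n IH].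
  - simpl. replace (0 + 1) with 1 by ring. apply gam1.
  - rewrite S_INR. replace (INR (fact (S n))) with ((INR n + 1) * INR (fact n)).
    + apply gam_rec; auto. pose proof (pos_INR n); lra.
    + rewrite fact_simpl, mult_INR, S_INR. ring.
Qed.

Fixpoint Phalf (n : nat) : R := match n with 0%nat => 1 | S n => (INR n + / 2) * Phalf n end.

Lemma gam_half_all n :
  is_RInt_gen (gam (/ 2)) (at_right 0) (Rbar_locally p_infty) (sqrt PI) ->
  is_RInt_gen (gam (INR n + / 2)) (at_right 0) (Rbar_locally p_infty) (sqrt PI * Phalf n).
Proof.
  intros H0. induction n as [|n IH].
  - simpl. replace (0 + / 2) with (/ 2) by ring. replace (sqrt PI * 1) with (sqrt PI) by ring. auto.
  - rewrite S_INR. replace (INR n + 1 + / 2) with ((INR n + / 2) + 1) by ring. simpl Phalf.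
    replace (sqrt PI * ((INR n + / 2) * Phalf n)) with ((INR n + / 2) * (sqrt PI * Phalf n)) by ring.
    apply gam_rec; auto. pose proof (pos_INR n); lra.
Qed.


Definition gf (y : R) := exp (- y ^ 2).
Definition EE (x : R) := RInt gf 0 x.

Lemma gf_cont x : continuous gf x.
Proof. apply cont_ex_der. unfold gf. auto_derive; auto. Qed.

Lemma gf_exR a b : ex_RInt gf a b.
Proof. apply ex_RInt_cont. intros; apply gf_cont. Qed.

Lemma EE_der x : is_derive EE x (gf x).
Proof.
  apply is_derive_RInt with 0.
  - apply filter_forall. intros b. apply RInt_correct, gf_exR.
  - apply gf_cont.
Qed.

Definition hf (u t : R) := exp (- (u ^ 2) * (1 + t ^ 2)) / (1 + t ^ 2).
Definition HH (x : R) := RInt (fun t => hf x t) 0 1.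

Lemma hf_der u t : is_derive (fun z => hf z t) u (- 2 * u * exp (- (u ^ 2) * (1 + t ^ 2))).
Proof.
  unfold hf. auto_derive.
  - pose proof (pow2_ge_0 t). lra.
  - simpl. field. pose proof (pow2_ge_0 t). simpl in *. nra.
Qed.

Lemma cont2_exp_id1 : forall x y, continuity_2d_pt (fun u v => - 2 * u * exp (- (u ^ 2) * (1 + v ^ 2))) x y.
Proof.
  intros x y.
  apply continuity_2d_pt_mult.
  - apply continuity_2d_pt_mult; [apply continuity_2d_pt_const|apply continuity_2d_pt_id1].
  - apply (continuity_1d_2d_pt_comp exp (fun u v => - (u ^ 2) * (1 + v ^ 2))).
    + apply continuity_pt_filterlim, continuous_exp.
    + apply continuity_2d_pt_mult.
      * apply continuity_2d_pt_opp. simpl.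
        apply continuity_2d_pt_mult; [apply continuity_2d_pt_id1|].
        apply continuity_2d_pt_mult; [apply continuity_2d_pt_id1|apply continuity_2d_pt_const].
      * apply continuity_2d_pt_plus; [apply continuity_2d_pt_const|]. simpl.
        apply continuity_2d_pt_mult; [apply continuity_2d_pt_id2|].
        apply continuity_2d_pt_mult; [apply continuity_2d_pt_id2|apply continuity_2d_pt_const].
Qed.

Lemma HH_der x : is_derive HH x (- 2 * gf x * EE x).
Proof.
  unfold HH.
  eapply der_eq; [|apply (is_derive_RInt_param hf 0 1 x)].
  - rewrite (RInt_ext _ (fun t => (- 2 * gf x) * (x * gf (x * t + 0)))).
    2:{ intros t _. etransitivity; [apply is_derive_unique, hf_der|]. unfold gf. simpl.
        replace (exp (- (x * (x * 1)) * (1 + t * (t * 1)))) with (exp (- (x*(x*1))) * exp (- ((x*t+0)*((x*t+0)*1)))) by (rewrite <- exp_plus; f_equal; ring).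
        ring. }
    rewrite RInt_scal_R.
    2:{ apply ex_RInt_cont. intros z _. 
        apply (cont_ex_der (fun t => x * gf (x * t + 0))). unfold gf. auto_derive; auto. }
    rewrite RInt_comp_lin_R. 2:{ apply gf_exR. }
    unfold EE. rewrite Rmult_0_r, !Rplus_0_r, Rmult_1_r. reflexivity.
  - apply filter_forall. intros y t _. eexists. apply hf_der.
  - intros t _. eapply continuity_2d_pt_ext; [|apply cont2_exp_id1].
    intros u v. simpl. symmetry. apply is_derive_unique, hf_der.
  - apply filter_forall. intros y. apply ex_RInt_cont. intros z _.
    apply (cont_ex_der (fun t => hf y t)). unfold hf. auto_derive. pose proof (pow2_ge_0 z). lra.
Qed.

Definition DD x := EE x ^ 2 + HH x.

Lemma DD_der x : is_derive DD x 0.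
Proof.
  unfold DD.
  assert (H2 : is_derive (fun t => EE t ^ 2) x (gf x * EE x + EE x * gf x)).
  { apply (is_derive_ext (fun t => EE t * EE t)); [intros; simpl; ring|].
    apply der_mult; apply EE_der. }
  eapply der_eq; [|apply der_plus; [exact H2|apply HH_der]].
  simpl. ring.
Qed.

Lemma DD_const x : DD x = PI / 4.
Proof.
  assert (H0 : DD 0 = PI / 4).
  { unfold DD, EE, HH. rewrite RInt_point. unfold zero; simpl.
    rewrite (RInt_ext _ (fun t => / (1 + t ^ 2))).
    2:{ intros t _. unfold hf. simpl. rewrite !Rmult_0_l, Ropp_0, Rmult_0_l, exp_0. unfold Rdiv. apply Rmult_1_l. }
    rewrite (is_RInt_unique _ 0 1 (minus (atan 1) (atan 0))).
    - rewrite atan_1, atan_0. unfold minus, plus, opp; simpl. ring.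
    - apply (is_RInt_derive (V:=R_CompleteNormedModule)).
      + intros z _. apply is_derive_Reals, derivable_pt_lim_atan.
      + intros z _. apply (cont_ex_der (fun t => / (1 + t ^ 2))). auto_derive. pose proof (pow2_ge_0 z). lra. }
  rewrite <- H0.
  destruct (MVT_gen DD 0 x (fun _ => 0)) as [c [_ Hc]].
  - intros; apply DD_der.
  - intros; apply continuity_pt_filterlim, cont_ex_der. eexists; apply DD_der.
  - lra.
Qed.

Lemma HH_bound x : 0 <= HH x <= exp (- x ^ 2).
Proof.
  assert (Hex : ex_RInt (fun t => hf x t) 0 1).
  { apply ex_RInt_cont. intros z _.
    apply (cont_ex_der (fun t => hf x t)). unfold hf. auto_derive. pose proof (pow2_ge_0 z). lra. }
  split.
  - apply RInt_ge_0; [lra|auto|]. intros t _. unfold hf. pose proof (pow2_ge_0 t).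
    apply Rmult_le_pos; [apply Rlt_le, exp_pos|]. apply Rlt_le, Rinv_0_lt_compat. lra.
  - replace (exp (- x ^ 2)) with (RInt (fun _ => exp (- x ^ 2)) 0 1).
    2:{ rewrite RInt_const. unfold scal; simpl; unfold mult; simpl. ring. }
    apply RInt_le; [lra|auto|apply ex_RInt_const|].
    intros t _. unfold hf. pose proof (pow2_ge_0 t). pose proof (pow2_ge_0 x).
    assert (exp (- x ^ 2 * (1 + t ^ 2)) <= exp (- x ^ 2)).
    { destruct (Req_dec (x^2 * t^2) 0) as [He|He].
      - right. f_equal. nra.
      - left. apply exp_increasing. assert (0 < x^2*t^2) by nra. nra. }
    apply Rle_trans with (exp (- x ^ 2 * (1 + t ^ 2)) / 1).
    + apply Rmult_le_compat_l; [apply Rlt_le, exp_pos|]. apply Rinv_le_contravar; lra.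
    + unfold Rdiv; rewrite Rinv_1; lra.
Qed.

Lemma lim_exp_mx2 : filterlim (fun x => exp (- x ^ 2)) (Rbar_locally p_infty) (locally 0).
Proof.
  eapply filterlim_comp; [|apply is_lim_exp_m].
  intros P [M HM]. exists (Rmax 1 (- M)). intros x Hx. apply HM.
  pose proof (Rmax_l 1 (-M)). pose proof (Rmax_r 1 (-M)). nra.
Qed.

Lemma EE_sq_lim : filterlim (fun x => EE x ^ 2) (Rbar_locally p_infty) (locally (PI / 4)).
Proof.
  apply filterlim_ext with (fun x => PI / 4 - HH x).
  { intros x. rewrite <- (DD_const x). unfold DD. ring. }
  apply (lim_eq _ (PI / 4 - 0)); [simpl; ring|]. apply lim_minus; [apply lim_const|].
  apply filterlim_locally. intros eps.
  generalize (proj1 (filterlim_locally _ _) lim_exp_mx2 eps). apply filter_imp.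
  intros x Hx. pose proof (HH_bound x).
  unfold ball in *; simpl in *; unfold AbsRing_ball, abs, minus, plus, opp in *; simpl in *.
  rewrite Rabs_pos_eq in Hx by (pose proof (exp_pos (- x^2)); lra).
  rewrite Rabs_pos_eq; lra.
Qed.

Lemma EE_ge0 x : 0 <= x -> 0 <= EE x.
Proof.
  intros Hx. apply RInt_ge_0; auto. apply gf_exR. intros; unfold gf; apply Rlt_le, exp_pos.
Qed.

Lemma EE_lim : filterlim EE (Rbar_locally p_infty) (locally (sqrt PI / 2)).
Proof.
  apply filterlim_ext_loc with (fun x => sqrt (EE x ^ 2)).
  { exists 0. intros x Hx. rewrite <- Rsqr_pow2. apply sqrt_Rsqr, EE_ge0. lra. }
  replace (sqrt PI / 2) with (sqrt (PI / 4)).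
  - apply (lim_cont sqrt (fun x => EE x ^ 2)); [apply continuous_sqrt|apply EE_sq_lim].
  - rewrite sqrt_div_alt; [|lra]. replace 4 with (2 * 2) by ring. rewrite sqrt_square; lra.
Qed.

Lemma gam_half : is_RInt_gen (gam (/ 2)) (at_right 0) (Rbar_locally p_infty) (sqrt PI).
Proof.
  set (phi := fun t => 2 * EE (sqrt t)).
  set (psi := fun t => exp (- t) / sqrt t).
  assert (Hd : forall x, 0 < x -> is_derive phi x (psi x)).
  { intros x Hx. unfold phi, psi.
    assert (Hs : 0 < sqrt x) by (apply sqrt_lt_R0; auto).
    eapply der_eq; [|apply (der_mult (fun _ => 2) (fun t => EE (sqrt t)));
      [apply (is_derive_const (K:=R_AbsRing) (V:=R_NormedModule))|apply (der_comp EE sqrt); [apply EE_der|]]].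
    2:{ apply is_derive_Reals, derivable_pt_lim_sqrt; auto. }
    unfold gf. rewrite <- Rsqr_pow2, Rsqr_sqrt by lra. simpl. unfold zero; simpl. field. lra. }
  assert (H1 : is_RInt_gen (Derive phi) (at_right 0) (Rbar_locally p_infty) (sqrt PI - 0)).
  { apply is_RInt_gen_Derive.
    - eapply filter_imp; [|apply prod_pos]. intros ab H x Hx. eexists. apply Hd. auto.
    - eapply filter_imp; [|apply prod_pos]. intros ab H x Hx.
      assert (Hx0 : 0 < x) by auto.
      apply (continuous_ext_loc _ psi).
      + eapply filter_imp; [|apply open_pos; exact Hx0]. intros y Hy. simpl.
        symmetry; apply is_derive_unique; auto.
      + apply cont_ex_der. unfold psi. auto_derive. pose proof (sqrt_lt_R0 x Hx0). lra.
    - unfold phi. apply (lim_eq _ (2 * EE (sqrt 0))).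
      { rewrite sqrt_0. unfold EE. rewrite RInt_point. simpl. unfold zero; simpl; ring. }
      apply lim_mult; [apply lim_const|].
      apply lim_cont; [apply cont_ex_der; eexists; apply EE_der|].
      apply lim_cont; [apply continuous_sqrt|apply lim_id_right].
    - unfold phi. apply (lim_eq _ (2 * (sqrt PI / 2))); [simpl; field|].
      apply lim_mult; [apply lim_const|].
      eapply filterlim_comp; [|apply EE_lim]. apply filterlim_sqrt_p. }
  replace (sqrt PI - 0) with (sqrt PI) in H1 by ring.
  eapply is_RInt_gen_ext; [|exact H1].
  eapply filter_imp; [|apply prod_pos']. intros ab H x Hx. simpl.
  assert (Hx0 : 0 < x) by auto.
  rewrite (is_derive_unique _ _ _ (Hd x Hx0)). unfold psi, gam.
  replace (/ 2 - 1) with (- / 2) by field. rewrite Rpower_Ropp, Rpower_sqrt by auto.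
  unfold Rdiv. ring.
Qed.


Inductive poly : (R -> R) -> Prop :=
| poly_c c : poly (fun _ => c)
| poly_id : poly (fun t => t)
| poly_add f g : poly f -> poly g -> poly (fun t => f t + g t)
| poly_mul f g : poly f -> poly g -> poly (fun t => f t * g t)
| poly_ext f g : poly f -> (forall t, f t = g t) -> poly g.

Lemma poly_der f : poly f -> (forall x, ex_derive f x) /\ poly (Derive f).
Proof.
  induction 1 as [c| |f g Pf [Df Pf'] Pg [Dg Pg']|f g Pf [Df Pf'] Pg [Dg Pg']|f g Pf [Df Pf'] Heq].
  - split; [intros; apply ex_derive_const|]. apply poly_ext with (fun _ => 0); [apply poly_c|].
    intros; symmetry; apply Derive_const.
  - split; [intros; apply ex_derive_id|]. apply poly_ext with (fun _ => 1); [apply poly_c|].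
    intros; symmetry; apply Derive_id.
  - split; [intros; apply (ex_derive_plus f g); auto|].
    apply poly_ext with (fun t => Derive f t + Derive g t); [apply poly_add; auto|].
    intros; symmetry; apply Derive_plus; auto.
  - split; [intros; apply (ex_derive_mult f g); auto|].
    apply poly_ext with (fun t => Derive f t * g t + f t * Derive g t);
      [apply poly_add; apply poly_mul; auto|].
    intros; symmetry; apply Derive_mult; auto.
  - assert (Hfg : f = g) by (apply functional_extensionality; auto). subst g. auto.
Qed.

Lemma poly_ex f x : poly f -> ex_derive f x.
Proof. intros H; apply (proj1 (poly_der f H)). Qed.
Lemma poly_cont f x : poly f -> continuous f x.
Proof. intros H; apply cont_ex_der, poly_ex; auto. Qed.
Lemma poly_D f : poly f -> poly (Derive f).
Proof. intros H; apply (proj2 (poly_der f H)). Qed.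

Lemma poly_w : poly (fun t => 1 - t ^ 2).
Proof.
  apply poly_ext with (fun t => 1 + (-1) * (t * t)); [|intros; simpl; ring].
  apply poly_add; [apply poly_c|]. apply poly_mul; [apply poly_c|apply poly_mul; apply poly_id].
Qed.

Fixpoint pp (m : nat) : R -> R :=
  match m with
  | 0%nat => fun _ => 1
  | S k => fun t => Derive (pp k) t * (1 - t ^ 2) + (2 * INR k - 1) * t * pp k t
  end.
Fixpoint qq (m : nat) : R -> R :=
  match m with
  | 0%nat => fun _ => 0
  | S k => fun t => pp k t + Derive (qq k) t * (1 - t ^ 2) + 2 * (INR k - 1) * t * qq k t
  end.

Lemma poly_pp m : poly (pp m).
Proof.
  induction m as [|m IH]; simpl.
  - apply poly_c.
  - apply poly_add; apply poly_mul.
    + apply poly_D; auto.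
    + apply poly_w.
    + apply poly_mul; [apply poly_c|apply poly_id].
    + auto.
Qed.
Lemma poly_qq m : poly (qq m).
Proof.
  induction m as [|m IH]; simpl.
  - apply poly_c.
  - apply poly_add; [apply poly_add|].
    + apply poly_pp.
    + apply poly_mul; [apply poly_D; auto|apply poly_w].
    + apply poly_mul; [apply poly_mul; [apply poly_c|apply poly_id]|auto].
Qed.

Lemma pp_1 m : pp (S m) 1 = (2 * INR m - 1) * pp m 1.
Proof. simpl. ring. Qed.

Definition sw (t : R) := sqrt (1 - t ^ 2).
Definition uu (t : R) := PI - acos t.
Definition Wp (m : nat) (t : R) := (1 - t ^ 2) ^ m.

Lemma sw_pos t : -1 < t < 1 -> 0 < sw t.
Proof. intros H. unfold sw. apply sqrt_lt_R0. nra. Qed.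
Lemma sw_sq t : -1 < t < 1 -> sw t * sw t = 1 - t ^ 2.
Proof. intros H. unfold sw. apply sqrt_sqrt. nra. Qed.

Lemma sw_der t : -1 < t < 1 -> is_derive sw t (- t * sw t / (1 - t ^ 2)).
Proof.
  intros H. pose proof (sw_pos t H) as Hp. pose proof (sw_sq t H) as Hs.
  unfold sw in *. auto_derive.
  - nra.
  - replace (1 + - (t * (t * 1))) with (1 - t ^ 2) by ring. set (s := sqrt (1 - t ^ 2)) in *. rewrite <- Hs. field. lra.
Qed.

Lemma uu_der t : -1 < t < 1 -> is_derive uu t (/ sw t).
Proof.
  intros H. unfold uu.
  assert (Ha : is_derive acos t (-1 / sqrt (1 - t²))).
  { apply is_derive_Reals. apply (derive_pt_eq_1 _ _ _ (derivable_pt_acos t H)). apply derive_pt_acos. }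
  eapply der_eq; [|apply der_plus; [apply (is_derive_const (K:=R_AbsRing) (V:=R_NormedModule) PI)|apply der_opp, Ha]].
  unfold sw, Rsqr. simpl. unfold zero; simpl. replace (t * (t * 1)) with (t * t) by ring. field.
  apply Rgt_not_eq, sqrt_lt_R0. nra.
Qed.

Lemma Wp_der m t : -1 < t < 1 -> is_derive (Wp m) t (- 2 * INR m * t * Wp m t / (1 - t ^ 2)).
Proof.
  intros H. unfold Wp. destruct m as [|m].
  - simpl. eapply der_eq; [|apply (is_derive_const (K:=R_AbsRing) (V:=R_NormedModule))]. simpl. unfold zero; simpl. field. nra.
  - auto_derive; [auto|]. change (match m with 0%nat => 1 | S _ => INR m + 1 end) with (INR (S m)). replace (1 + - (t * (t * 1))) with (1 - t ^ 2) by ring. change ((1 - t ^ 2) ^ S m) with ((1 - t ^ 2) * (1 - t ^ 2) ^ m). field. nra.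
Qed.

Definition L2 (m : nat) (t : R) : R :=
  match m with 0%nat => - / (4 * PI) * t | 1%nat => - / (4 * PI) | _ => 0 end.

Lemma L2_der m t : is_derive (L2 m) t (L2 (S m) t).
Proof.
  destruct m as [|[|m]]; simpl.
  - eapply der_eq; [|apply (der_mult (fun _ => - / (4*PI)) (fun t => t)); [apply (is_derive_const (K:=R_AbsRing) (V:=R_NormedModule))|apply (is_derive_id (K:=R_AbsRing))]]. simpl. unfold zero, one; simpl. ring.
  - eapply der_eq; [|apply (is_derive_const (K:=R_AbsRing) (V:=R_NormedModule))]. reflexivity.
  - eapply der_eq; [|apply (is_derive_const (K:=R_AbsRing) (V:=R_NormedModule))]. reflexivity.
Qed.

Definition A2 (m : nat) (t : R) := (uu t * pp m t * sw t + qq m t * (1 - t ^ 2)) / Wp m t.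
Definition H2 (m : nat) (t : R) := / (2 * PI) * A2 m t + L2 m t.

Lemma Wp_pos m t : -1 < t < 1 -> 0 < Wp m t.
Proof. intros H. unfold Wp. apply pow_lt. nra. Qed.

Lemma A2_der m t : -1 < t < 1 -> is_derive (A2 m) t (A2 (S m) t).
Proof.
  intros H. pose proof (Wp_pos m t H) as HW. pose proof (sw_pos t H) as Hs.
  unfold A2. auto_derive.
  - split; [eexists; apply uu_der; auto|]. split; [apply poly_ex, poly_pp|].
    split; [eexists; apply sw_der; auto|]. split; [apply poly_ex, poly_qq|].
    split; [eexists; apply Wp_der; auto|]. split; [lra|exact I].
  - change (Derive (fun x : R => uu x) t) with (Derive uu t).
    change (Derive (fun x : R => sw x) t) with (Derive sw t).
    change (Derive (fun x : R => Wp m x) t) with (Derive (Wp m) t).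
    change (Derive (fun x : R => pp m x) t) with (Derive (pp m) t).
    change (Derive (fun x : R => qq m x) t) with (Derive (qq m) t).
    rewrite (is_derive_unique uu t _ (uu_der t H)), (is_derive_unique sw t _ (sw_der t H)),
      (is_derive_unique (Wp m) t _ (Wp_der m t H)).
    change (pp (S m) t) with (Derive (pp m) t * (1 - t ^ 2) + (2 * INR m - 1) * t * pp m t).
    change (qq (S m) t) with (pp m t + Derive (qq m) t * (1 - t ^ 2) + 2 * (INR m - 1) * t * qq m t).
    change (Wp (S m) t) with ((1 - t ^ 2) * Wp m t).
    assert (Hw : 1 - t ^ 2 <> 0) by nra.
    replace (1 + - (t * (t * 1))) with (1 - t ^ 2) by ring.
    field. repeat split; lra.
Qed.

Lemma H2_der m t : -1 < t < 1 -> is_derive (H2 m) t (H2 (S m) t).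
Proof.
  intros H. unfold H2. apply der_plus; [|apply L2_der].
  eapply der_eq; [|apply (der_mult (fun _ => / (2 * PI)) (A2 m)); [apply (is_derive_const (K:=R_AbsRing) (V:=R_NormedModule))|apply A2_der; auto]].
  simpl. unfold zero; simpl. ring.
Qed.

Lemma g2_H2 m : forall t, -1 < t < 1 -> Derive_n g2 m t = H2 m t.
Proof.
  induction m as [|m IH]; intros t H.
  - simpl. unfold g2, H2, A2, L2, Wp, uu, sw. simpl. pose proof PI_RGT_0. field. lra.
  - simpl. rewrite (Derive_ext_loc _ (H2 m)).
    + apply is_derive_unique, H2_der; auto.
    + eapply filter_imp; [|apply open_int; exact H]. intros y Hy. apply IH; auto.
Qed.

Lemma g2_smooth m t : -1 < t < 1 -> ex_derive (Derive_n g2 m) t.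
Proof.
  intros H. apply (ex_derive_ext_loc (H2 m)).
  - eapply filter_imp; [|apply open_int; exact H]. intros y Hy. symmetry; apply g2_H2; auto.
  - eexists; apply H2_der; auto.
Qed.

Lemma cont_left (h : R -> R) a : continuous h a -> filterlim h (at_left a) (locally (h a)).
Proof. intros Hc. apply (lim_cont h (fun t => t)); [auto|apply lim_id_left]. Qed.
Lemma cont_right (h : R -> R) a : continuous h a -> filterlim h (at_right a) (locally (h a)).
Proof. intros Hc. apply (lim_cont h (fun t => t)); [auto|apply lim_id_right]. Qed.

Lemma acos_lim1 : filterlim acos (at_left 1) (locally 0).
Proof.
  apply filterlim_ext_loc with (fun t => atan (sqrt (1 - t * t) * / t)).
  { exists (mkposreal _ Rlt_0_1). intros y Hy Hlt.
    unfold ball in Hy; simpl in Hy; unfold AbsRing_ball, abs, minus, plus, opp in Hy; simpl in Hy.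
    apply Rabs_lt_between in Hy. rewrite acos_atan by lra. reflexivity. }
  apply (lim_eq _ (atan (sqrt (1 - 1 * 1) * / 1))).
  { replace (1 - 1 * 1) with 0 by ring. rewrite sqrt_0, Rmult_0_l. apply atan_0. }
  apply (cont_left (fun t => atan (sqrt (1 - t * t) * / t))).
  apply (lim_cont atan (fun t => sqrt (1 - t * t) * / t)).
  - apply cont_ex_der. eexists. apply is_derive_Reals, derivable_pt_lim_atan.
  - apply lim_mult.
    + apply (lim_cont sqrt (fun t => 1 - t * t)); [apply continuous_sqrt|].
      apply lim_minus; [apply lim_const|apply lim_mult; apply filterlim_id].
    + apply (cont_ex_der (fun t => / t)). auto_derive. lra.
Qed.

Lemma uu_lim1 : filterlim uu (at_left 1) (locally PI).
Proof.
  unfold uu. apply (lim_eq _ (PI - 0)); [simpl; ring|]. apply lim_minus; [apply lim_const|apply acos_lim1].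
Qed.

Lemma uu_limm1 : filterlim uu (at_right (-1)) (locally 0).
Proof.
  apply filterlim_ext with (fun t => acos (- t)).
  { intros t. unfold uu. rewrite acos_opp. reflexivity. }
  eapply filterlim_comp; [|apply acos_lim1].
  intros P [eps HP]. exists eps. intros y Hy Hlt. apply HP; [|lra].
  unfold ball in *; simpl in *; unfold AbsRing_ball, abs, minus, plus, opp in *; simpl in *.
  replace (- y + - (1)) with (- (y + - (-1))) by ring. rewrite Rabs_Ropp. auto.
Qed.

Lemma sw_cont x : continuous sw x.
Proof.
  unfold sw. apply (lim_cont sqrt (fun t => 1 - t ^ 2)); [apply continuous_sqrt|].
  apply lim_minus; [apply lim_const|apply lim_pow, filterlim_id].
Qed.

Lemma sw_1 : sw 1 = 0.
Proof. unfold sw. replace (1 - 1 ^ 2) with 0 by ring. apply sqrt_0. Qed.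
Lemma sw_m1 : sw (-1) = 0.
Proof. unfold sw. replace (1 - (-1) ^ 2) with 0 by ring. apply sqrt_0. Qed.


Definition EE2 (j m : nat) := (INR j - 3) / 2 + INR m.
Definition Lval (j m : nat) := - (INR j - 1) * Rpower 2 (INR m - 2)
              * Gamma ((INR j - 3) / 2 + INR m) / Rpower PI ((INR j - 1) / 2).

Definition MainR j m := filterlim (fun t => Rpower (1 - t ^ 2) (EE2 j m) * Derive_n (berg j) m t)
  (at_right (-1)) (locally 0).
Definition MainL j m := filterlim (fun t => Rpower (1 - t ^ 2) (EE2 j m) * Derive_n (berg j) m t)
  (at_left 1) (locally (Lval j m)).
Definition AuxR j m := filterlim (fun t => Rpower (1 - t ^ 2) (EE2 j m + 1) * Derive_n (berg j) m t)
  (at_right (-1)) (locally 0).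
Definition AuxL j m := filterlim (fun t => Rpower (1 - t ^ 2) (EE2 j m + 1) * Derive_n (berg j) m t)
  (at_left 1) (locally 0).
Definition Smooth j := forall m t, -1 < t < 1 -> ex_derive (Derive_n (berg j) m) t.

Lemma INR2 : INR 2 = 2.
Proof. simpl. ring. Qed.

Lemma w_pos t : -1 < t < 1 -> 0 < 1 - t ^ 2.
Proof. intros; nra. Qed.

Lemma w_lim_right : filterlim (fun t => 1 - t ^ 2) (at_right (-1)) (locally 0).
Proof. apply (lim_eq _ (1 - (-1)^2)); [simpl; lra|]. apply lim_minus; [apply lim_const|apply lim_pow, lim_id_right]. Qed.
Lemma w_lim_left : filterlim (fun t => 1 - t ^ 2) (at_left 1) (locally 0).
Proof. apply (lim_eq _ (1 - 1^2)); [simpl; lra|]. apply lim_minus; [apply lim_const|apply lim_pow, lim_id_left]. Qed.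

Lemma aux_gen (F : (R -> Prop) -> Prop) {FF : Filter F} (D : R -> R) e L :
  F (fun t => -1 < t < 1) -> filterlim (fun t => 1 - t ^ 2) F (locally 0) ->
  filterlim (fun t => Rpower (1 - t ^ 2) e * D t) F (locally L) ->
  filterlim (fun t => Rpower (1 - t ^ 2) (e + 1) * D t) F (locally 0).
Proof.
  intros Hev Hw Hl.
  apply filterlim_ext_loc with (fun t => (1 - t ^ 2) * (Rpower (1 - t ^ 2) e * D t)).
  { eapply filter_imp; [|exact Hev]. intros t Ht. rewrite Rpower_plus, Rpower_1 by (apply w_pos; auto). ring. }
  apply (lim_eq _ (0 * L)); [simpl; ring|]. apply lim_mult; auto.
Qed.

Lemma auxR_of_main j m : MainR j m -> AuxR j m.
Proof. intros H. exact (aux_gen _ _ _ _ ev_right_m1 w_lim_right H). Qed.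
Lemma auxL_of_main j m : MainL j m -> AuxL j m.
Proof. intros H. exact (aux_gen _ _ _ _ ev_left_1 w_lim_left H). Qed.

Definition K2 (n : nat) (t : R) :=
  / (2 * PI) * (uu t * pp (S n) t + qq (S n) t * sw t) + (1 - t ^ 2) ^ n * sw t * L2 (S n) t.

Lemma j2_K n t : -1 < t < 1 ->
  Rpower (1 - t ^ 2) (EE2 2 (S n)) * Derive_n (berg 2) (S n) t = K2 n t.
Proof.
  intros H. change (berg 2) with g2. rewrite g2_H2 by auto.
  assert (Hw := w_pos t H). pose proof (sw_pos t H) as Hs. pose proof (sw_sq t H) as Hss.
  unfold EE2. replace ((INR 2 - 3) / 2 + INR (S n)) with (INR n + / 2) by (rewrite INR2, S_INR; field).
  rewrite Rpower_plus, Rpower_pow, Rpower_sqrt by auto. fold (sw t).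
  unfold H2, A2, K2. change (Wp (S n) t) with ((1 - t ^ 2) * (1 - t ^ 2) ^ n).
  rewrite <- Hss. pose proof PI_RGT_0.
  field. split; [lra|]. split; [apply pow_nonzero; nra|lra].
Qed.

Lemma L2S_cont n x : continuous (L2 (S n)) x.
Proof. destruct n; unfold continuous, L2; apply (filterlim_const (F := locally x)). Qed.

Lemma pp_at1 n : pp (S n) 1 = - 2 ^ n * Phalf n.
Proof.
  induction n as [|n IH].
  - simpl. ring.
  - rewrite pp_1, IH. simpl Phalf. rewrite S_INR. simpl pow. field.
Qed.

Lemma Rpower2 n : Rpower 2 (INR (S n) - 2) = 2 ^ n / 2.
Proof.
  replace (INR (S n) - 2) with (INR n + - (1)) by (rewrite S_INR; ring).
  rewrite Rpower_plus, Rpower_pow, Rpower_Ropp, Rpower_1 by lra. reflexivity.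
Qed.

Lemma Gamma_half n : Gamma (INR n + / 2) = sqrt PI * Phalf n.
Proof. apply Gamma_is, gam_half_all, gam_half. Qed.

Lemma main2 n : MainR 2 (S n) /\ MainL 2 (S n).
Proof.
  split.
  - unfold MainR. apply filterlim_ext_loc with (K2 n).
    { eapply filter_imp; [|apply ev_right_m1]. intros t Ht. symmetry; apply j2_K; auto. }
    apply (lim_eq _ (/ (2 * PI) * (0 * pp (S n) (-1) + qq (S n) (-1) * sw (-1)) + (1 - (-1) ^ 2) ^ n * sw (-1) * L2 (S n) (-1))).
    { rewrite sw_m1. simpl. ring. }
    unfold K2. apply lim_plus; [apply lim_mult; [apply lim_const|apply lim_plus]|].
    + apply lim_mult; [apply uu_limm1|apply cont_right, poly_cont, poly_pp].
    + apply lim_mult; [apply cont_right, poly_cont, poly_qq|apply cont_right, sw_cont].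
    + apply lim_mult; [apply lim_mult|apply cont_right, L2S_cont].
      * apply lim_pow. apply lim_minus; [apply lim_const|apply lim_pow, lim_id_right].
      * apply cont_right, sw_cont.
  - unfold MainL. apply filterlim_ext_loc with (K2 n).
    { eapply filter_imp; [|apply ev_left_1]. intros t Ht. symmetry; apply j2_K; auto. }
    apply (lim_eq _ (/ (2 * PI) * (PI * pp (S n) 1 + qq (S n) 1 * sw 1) + (1 - 1 ^ 2) ^ n * sw 1 * L2 (S n) 1)).
    { rewrite sw_1. unfold Lval. rewrite pp_at1, Rpower2.
      replace ((INR 2 - 3) / 2 + INR (S n)) with (INR n + / 2) by (rewrite INR2, S_INR; field).
      rewrite Gamma_half. replace ((INR 2 - 1) / 2) with (/ 2) by (simpl; field).
      rewrite Rpower_sqrt by apply PI_RGT_0.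
      assert (0 < sqrt PI) by (apply sqrt_lt_R0, PI_RGT_0). pose proof PI_RGT_0.
      simpl INR. field. lra. }
    unfold K2. apply lim_plus; [apply lim_mult; [apply lim_const|apply lim_plus]|].
    + apply lim_mult; [apply uu_lim1|apply cont_left, poly_cont, poly_pp].
    + apply lim_mult; [apply cont_left, poly_cont, poly_qq|apply cont_left, sw_cont].
    + apply lim_mult; [apply lim_mult|apply cont_left, L2S_cont].
      * apply lim_pow. apply lim_minus; [apply lim_const|apply lim_pow, lim_id_left].
      * apply cont_left, sw_cont.
Qed.

Lemma aux20 : AuxR 2 0 /\ AuxL 2 0.
Proof.
  assert (Heq : forall t, -1 < t < 1 -> Rpower (1 - t ^ 2) (EE2 2 0 + 1) * Derive_n (berg 2) 0 t
     = / (2 * PI) * uu t * (sw t * sw t) + sw t * L2 0 t).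
  { intros t H. change (Derive_n (berg 2) 0 t) with (g2 t).
    replace (EE2 2 0 + 1) with (/ 2) by (unfold EE2; simpl; field).
    rewrite Rpower_sqrt by (apply w_pos; auto). fold (sw t).
    unfold g2. fold (sw t). unfold uu, L2. field. apply PI_neq0. }
  split.
  - unfold AuxR. apply filterlim_ext_loc with (fun t => / (2 * PI) * uu t * (sw t * sw t) + sw t * L2 0 t).
    { eapply filter_imp; [|apply ev_right_m1]. intros t Ht. symmetry; apply Heq; auto. }
    apply (lim_eq _ (/ (2 * PI) * 0 * (sw (-1) * sw (-1)) + sw (-1) * L2 0 (-1))).
    { rewrite sw_m1. simpl. ring. }
    apply lim_plus; [apply lim_mult; [apply lim_mult; [apply lim_const|apply uu_limm1]|apply lim_mult; apply cont_right, sw_cont]|].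
    apply lim_mult; [apply cont_right, sw_cont|]. apply cont_right. unfold L2.
    apply (cont_ex_der (fun t => - / (4 * PI) * t)). auto_derive. auto.
  - unfold AuxL. apply filterlim_ext_loc with (fun t => / (2 * PI) * uu t * (sw t * sw t) + sw t * L2 0 t).
    { eapply filter_imp; [|apply ev_left_1]. intros t Ht. symmetry; apply Heq; auto. }
    apply (lim_eq _ (/ (2 * PI) * PI * (sw 1 * sw 1) + sw 1 * L2 0 1)).
    { rewrite sw_1. simpl. ring. }
    apply lim_plus; [apply lim_mult; [apply lim_mult; [apply lim_const|apply uu_lim1]|apply lim_mult; apply cont_left, sw_cont]|].
    apply lim_mult; [apply cont_left, sw_cont|]. apply cont_left. unfold L2.
    apply (cont_ex_der (fun t => - / (4 * PI) * t)). auto_derive. auto.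
Qed.

Lemma smooth2 : Smooth 2.
Proof. intros m t H. apply g2_smooth; auto. Qed.


Definition Vp (k : nat) (t : R) := (1 - t) ^ k.

Lemma Vp_der k t : t < 1 -> is_derive (Vp k) t (- INR k * Vp k t / (1 - t)).
Proof.
  intros H. unfold Vp. destruct k as [|k].
  - simpl. eapply der_eq; [|apply (is_derive_const (K:=R_AbsRing) (V:=R_NormedModule))]. simpl. unfold zero; simpl. field. lra.
  - auto_derive; [auto|]. change (match k with 0%nat => 1 | S _ => INR k + 1 end) with (INR (S k)).
    replace (1 + - t) with (1 - t) by ring. change ((1 - t) ^ S k) with ((1 - t) * (1 - t) ^ k). field. lra.
Qed.

Lemma Vp_pos k t : t < 1 -> 0 < Vp k t.
Proof. intros H. unfold Vp. apply pow_lt. lra. Qed.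

Definition c3 := 4 / 3 - ln 2.

Definition D3 (m : nat) (t : R) : R :=
  match m with
  | 0%nat => g3 t
  | 1%nat => / (2 * PI) * (ln (1 - t) + 1 - / (1 - t) + c3)
  | S (S k) => / (2 * PI) * (- INR (fact k) / Vp (S k) t - INR (fact (S k)) / Vp (S (S k)) t)
  end.

Lemma D3_der m t : t < 1 -> is_derive (D3 m) t (D3 (S m) t).
Proof.
  intros H. pose proof PI_RGT_0.
  destruct m as [|[|k]].
  - apply (is_derive_ext (fun t => 1 / (2 * PI) * (1 + t * ln (1 - t) + (4 / 3 - ln 2) * t))); [reflexivity|].
    change (D3 1 t) with (/ (2 * PI) * (ln (1 - t) + 1 - / (1 - t) + c3)).
    unfold c3. auto_derive; [lra|]. replace (1 + - t) with (1 - t) by ring. field. lra.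
  - apply (is_derive_ext (fun t => / (2 * PI) * (ln (1 - t) + 1 - / (1 - t) + c3))); [reflexivity|].
    change (D3 2 t) with (/ (2 * PI) * (- INR (fact 0) / Vp 1 t - INR (fact 1) / Vp 2 t)).
    auto_derive; [lra|]. unfold Vp. simpl. field. lra.
  - pose proof (Vp_pos (S k) t H).
    apply (is_derive_ext (fun t => / (2 * PI) * (- INR (fact k) / Vp (S k) t - INR (fact (S k)) / Vp (S (S k)) t))); [reflexivity|].
    change (D3 (S (S (S k))) t) with (/ (2 * PI) * (- INR (fact (S k)) / Vp (S (S k)) t - INR (fact (S (S k))) / Vp (S (S (S k))) t)).
    auto_derive.
    + repeat split; try (eexists; apply Vp_der; auto); try (apply Rgt_not_eq; apply Vp_pos; auto).
    + change (Derive (fun x : R => Vp (S k) x) t) with (Derive (Vp (S k)) t).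
      change (Derive (fun x : R => Vp (S (S k)) x) t) with (Derive (Vp (S (S k))) t).
      rewrite (is_derive_unique (Vp (S k)) t _ (Vp_der (S k) t H)).
      rewrite (is_derive_unique (Vp (S (S k))) t _ (Vp_der (S (S k)) t H)).
      change (Vp (S (S k)) t) with ((1 - t) * Vp (S k) t).
      change (Vp (S (S (S k))) t) with ((1 - t) * ((1 - t) * Vp (S k) t)).
      rewrite (fact_simpl (S k)), (fact_simpl k), !mult_INR, !S_INR. rewrite ?plus_INR, ?mult_INR. field. split; lra.
Qed.

Lemma g3_D3 m : forall t, -1 < t < 1 -> Derive_n (berg 3) m t = D3 m t.
Proof.
  induction m as [|m IH]; intros t H.
  - reflexivity.
  - simpl. rewrite (Derive_ext_loc _ (D3 m)).
    + apply is_derive_unique, D3_der; lra.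
    + eapply filter_imp; [|apply open_int; exact H]. intros y Hy. apply IH; auto.
Qed.

Lemma smooth3 : Smooth 3.
Proof.
  intros m t H. apply (ex_derive_ext_loc (D3 m)).
  - eapply filter_imp; [|apply open_int; exact H]. intros y Hy. symmetry; apply g3_D3; auto.
  - eexists; apply D3_der; lra.
Qed.

Lemma ev01 : at_right 0 (fun y => y < 1).
Proof.
  exists (mkposreal 1 Rlt_0_1). intros y Hy Hlt. simpl in *.
  unfold ball in Hy; simpl in Hy; unfold AbsRing_ball, abs, minus, plus, opp in Hy; simpl in Hy.
  apply Rabs_lt_between in Hy. lra.
Qed.

Lemma xlnx : filterlim (fun y => y * ln y) (at_right 0) (locally 0).
Proof.
  apply filterlim_locally. intros eps.
  assert (Hs : filterlim (fun y => 2 * sqrt y) (at_right 0) (locally 0)).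
  { apply (lim_eq _ (2 * sqrt 0)); [rewrite sqrt_0; ring|].
    apply lim_mult; [apply lim_const|apply cont_right, continuous_sqrt]. }
  generalize (filter_and _ _ (proj1 (filterlim_locally _ _) Hs eps) ev01).
  intros Hf. generalize (filter_and _ _ Hf ev_pos_right). apply filter_imp.
  intros y [[Hb Hy1] Hy0].
  unfold ball in *; simpl in *; unfold AbsRing_ball, abs, minus, plus, opp in *; simpl in *.
  rewrite Ropp_0, Rplus_0_r in *.
  assert (Hq : 0 < sqrt y) by (apply sqrt_lt_R0; auto).
  assert (Hqq : sqrt y * sqrt y = y) by (apply sqrt_sqrt; lra).
  assert (Hl : ln y <= 0) by (rewrite <- ln_1; apply ln_le; lra).
  assert (Hl2 : - ln y < 2 / sqrt y).
  { assert (Hi : 0 < / sqrt y) by (apply Rinv_0_lt_compat; auto).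
    pose proof (ln_lt_self (/ sqrt y) Hi).
    rewrite ln_Rinv in H by auto.
    assert (ln y = 2 * ln (sqrt y)) by (rewrite <- Hqq at 1; rewrite ln_mult; auto; ring).
    unfold Rdiv. lra. }
  rewrite Rabs_pos_eq in Hb by (pose proof (sqrt_pos y); lra).
  rewrite Rabs_left1 by nra.
  assert (- (y * ln y) < 2 * sqrt y).
  { replace (2 * sqrt y) with (y * (2 / sqrt y)) by (field_simplify; [|lra]; rewrite <- Hqq at 1; field; lra). nra. }
  lra.
Qed.

Lemma omt_left : filterlim (fun t => 1 - t) (at_left 1) (at_right 0).
Proof.
  intros P [eps HP]. exists eps. intros y Hy Hlt. apply HP; [|lra].
  unfold ball in *; simpl in *; unfold AbsRing_ball, abs, minus, plus, opp in *; simpl in *.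
  replace (1 - y + - 0) with (- (y + - (1))) by ring. rewrite Rabs_Ropp. auto.
Qed.

Lemma lnlim1 : filterlim (fun t => (1 - t) * ln (1 - t)) (at_left 1) (locally 0).
Proof. exact (filterlim_comp _ _ _ (fun t => 1 - t) (fun y => y * ln y) _ _ _ omt_left xlnx). Qed.

Lemma INR3 : INR 3 = 3.
Proof. simpl. ring. Qed.

Lemma cont_ln_omt x : x < 1 -> continuous (fun t => ln (1 - t)) x.
Proof. intros H. apply cont_ex_der. auto_derive. lra. Qed.

Lemma main3 n : MainR 3 (S n) /\ MainL 3 (S n).
Proof.
  assert (He : EE2 3 (S n) = INR (S n)) by (unfold EE2; rewrite INR3; field).
  assert (HL : Lval 3 (S n) = - 2 ^ n * INR (fact n) / PI).
  { unfold Lval. rewrite Rpower2. replace ((INR 3 - 3) / 2 + INR (S n)) with (INR n + 1) by (rewrite INR3, S_INR; field).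
    rewrite (Gamma_is _ _ (gam_nat n)). replace ((INR 3 - 1) / 2) with 1 by (rewrite INR3; field).
    rewrite Rpower_1 by apply PI_RGT_0. rewrite INR3. field. apply PI_neq0. }
  pose proof PI_RGT_0.
  destruct n as [|k].
  -
    set (K := fun t => / (2 * PI) * ((1 + t) * ((1 - t) * ln (1 - t)) + (1 - t ^ 2) * (1 + c3) - (1 + t))).
    assert (Heq : forall t, -1 < t < 1 -> Rpower (1 - t ^ 2) (EE2 3 1) * Derive_n (berg 3) 1 t = K t).
    { intros t Ht. rewrite He, g3_D3 by auto. rewrite Rpower_pow by (apply w_pos; auto).
      unfold K, D3. simpl. field. split; lra. }
    split.
    + unfold MainR. apply filterlim_ext_loc with K.
      { eapply filter_imp; [|apply ev_right_m1]. intros t Ht. symmetry; apply Heq; auto. }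
      apply (lim_eq _ (/ (2 * PI) * ((1 + -1) * ((1 - -1) * ln (1 - -1)) + 0 * (1 + c3) - (1 + -1)))).
      { simpl; ring. }
      unfold K. apply lim_mult; [apply lim_const|]. apply lim_minus; [apply lim_plus|].
      * apply lim_mult; [apply lim_plus; [apply lim_const|apply lim_id_right]|].
        apply lim_mult; [apply lim_minus; [apply lim_const|apply lim_id_right]|].
        apply (cont_right (fun t => ln (1 - t))). apply cont_ln_omt; lra.
      * apply lim_mult; [|apply lim_const]. apply w_lim_right.
      * apply lim_plus; [apply lim_const|apply lim_id_right].
    + unfold MainL. apply filterlim_ext_loc with K.
      { eapply filter_imp; [|apply ev_left_1]. intros t Ht. symmetry; apply Heq; auto. }
      apply (lim_eq _ (/ (2 * PI) * ((1 + 1) * 0 + 0 * (1 + c3) - (1 + 1)))).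
      { rewrite HL. simpl. field. lra. }
      unfold K. apply lim_mult; [apply lim_const|]. apply lim_minus; [apply lim_plus|].
      * apply lim_mult; [apply lim_plus; [apply lim_const|apply lim_id_left]|]. apply lnlim1.
      * apply lim_mult; [|apply lim_const]. apply w_lim_left.
      * apply lim_plus; [apply lim_const|apply lim_id_left].
  -
    set (K := fun t => / (2 * PI) * ((1 + t) ^ (S (S k)) * (- INR (fact k) * (1 - t) - INR (fact (S k))))).
    assert (Heq : forall t, -1 < t < 1 -> Rpower (1 - t ^ 2) (EE2 3 (S (S k))) * Derive_n (berg 3) (S (S k)) t = K t).
    { intros t Ht. rewrite He, g3_D3 by auto. rewrite Rpower_pow by (apply w_pos; auto).
      unfold K, D3, Vp.
      replace (1 - t ^ 2) with ((1 + t) * (1 - t)) by ring. rewrite Rpow_mult_distr.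
      change ((1 - t) ^ S (S k)) with ((1 - t) * (1 - t) ^ S k).
      field. repeat split; try lra; apply pow_nonzero; lra. }
    assert (HK : forall x, continuous K x).
    { intros x. unfold K. apply lim_mult; [apply lim_const|]. apply lim_mult.
      - apply lim_pow, lim_plus; [apply lim_const|apply filterlim_id].
      - apply lim_minus; [|apply lim_const]. apply lim_mult; [apply lim_const|].
        apply lim_minus; [apply lim_const|apply filterlim_id]. }
    split.
    + unfold MainR. apply filterlim_ext_loc with K.
      { eapply filter_imp; [|apply ev_right_m1]. intros t Ht. symmetry; apply Heq; auto. }
      apply (lim_eq _ (K (-1))).
      { unfold K. replace (1 + -1) with 0 by ring. rewrite pow_ne_zero by lia. ring. }
      apply cont_right, HK.
    + unfold MainL. apply filterlim_ext_loc with K.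
      { eapply filter_imp; [|apply ev_left_1]. intros t Ht. symmetry; apply Heq; auto. }
      apply (lim_eq _ (K 1)).
      { rewrite HL. unfold K. replace (1 + 1) with 2 by ring. rewrite !fact_simpl, !mult_INR, !S_INR.
        simpl pow. field. lra. }
      apply cont_left, HK.
Qed.

Lemma aux30 : AuxR 3 0 /\ AuxL 3 0.
Proof.
  pose proof PI_RGT_0.
  set (K := fun t => / (2 * PI) * ((1 - t ^ 2) + t * (1 + t) * ((1 - t) * ln (1 - t)) + c3 * t * (1 - t ^ 2))).
  assert (Heq : forall t, -1 < t < 1 -> Rpower (1 - t ^ 2) (EE2 3 0 + 1) * Derive_n (berg 3) 0 t = K t).
  { intros t Ht. replace (EE2 3 0 + 1) with 1 by (unfold EE2; rewrite INR3; simpl; field).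
    rewrite Rpower_1 by (apply w_pos; auto). unfold K. simpl. unfold g3, c3. field. lra. }
  split.
  - unfold AuxR. apply filterlim_ext_loc with K.
    { eapply filter_imp; [|apply ev_right_m1]. intros t Ht. symmetry; apply Heq; auto. }
    apply (lim_eq _ (/ (2 * PI) * (0 + -1 * (1 + -1) * ((1 - -1) * ln (1 - -1)) + c3 * -1 * 0))).
    { simpl; ring. }
    unfold K. apply lim_mult; [apply lim_const|]. apply lim_plus; [apply lim_plus|].
    + apply w_lim_right.
    + apply lim_mult; [apply lim_mult; [apply lim_id_right|apply lim_plus; [apply lim_const|apply lim_id_right]]|].
      apply lim_mult; [apply lim_minus; [apply lim_const|apply lim_id_right]|].
      apply (cont_right (fun t => ln (1 - t))). apply cont_ln_omt; lra.
    + apply lim_mult; [apply lim_mult; [apply lim_const|apply lim_id_right]|apply w_lim_right].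
  - unfold AuxL. apply filterlim_ext_loc with K.
    { eapply filter_imp; [|apply ev_left_1]. intros t Ht. symmetry; apply Heq; auto. }
    apply (lim_eq _ (/ (2 * PI) * (0 + 1 * (1 + 1) * 0 + c3 * 1 * 0))).
    { ring. }
    unfold K. apply lim_mult; [apply lim_const|]. apply lim_plus; [apply lim_plus|].
    + apply w_lim_left.
    + apply lim_mult; [apply lim_mult; [apply lim_id_left|apply lim_plus; [apply lim_const|apply lim_id_left]]|].
      apply lnlim1.
    + apply lim_mult; [apply lim_mult; [apply lim_const|apply lim_id_left]|apply w_lim_left].
Qed.


Definition cA (k : nat) := (INR k + 1) / (2 * PI).
Definition cB (k : nat) := (INR k + 1) / (2 * PI * (INR k - 1)).
Definition cC (k : nat) := (INR k + 1) / (2 * PI * omega k).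
Definition Dk (k : nat) := Derive_n (berg k).

Lemma berg_SS k (Hk : (2 <= k)%nat) t :
  berg (S (S k)) t = cA k * berg k t + cB k * t * Derive (berg k) t + cC k * t.
Proof. unfold cA, cB, cC. destruct k as [|[|k']]; [lia|lia|reflexivity]. Qed.

Definition cm (m : nat) (t : R) := match m with 0%nat => t | 1%nat => 1 | _ => 0 end.

Lemma cm_der m t : is_derive (cm m) t (cm (S m) t).
Proof.
  destruct m as [|[|m]]; simpl.
  - apply (is_derive_id (K:=R_AbsRing)).
  - apply (is_derive_const (K:=R_AbsRing) (V:=R_NormedModule)).
  - apply (is_derive_const (K:=R_AbsRing) (V:=R_NormedModule)).
Qed.

Lemma cm_cont m x : continuous (cm m) x.
Proof. apply cont_ex_der. eexists. apply cm_der. Qed.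

Definition Fm (k m : nat) (t : R) :=
  cA k * Dk k m t + cB k * (t * Dk k (S m) t + INR m * Dk k m t) + cC k * cm m t.

Lemma Dk_der k (Sm : Smooth k) m t : -1 < t < 1 -> is_derive (Dk k m) t (Dk k (S m) t).
Proof. intros H. apply Derive_correct. apply Sm; auto. Qed.

Lemma Fm_der k (Sm : Smooth k) m t : -1 < t < 1 -> is_derive (Fm k m) t (Fm k (S m) t).
Proof.
  intros H. unfold Fm. set (A := cA k). set (B := cB k). set (C := cC k).
  assert (H1 : is_derive (fun t => A * Dk k m t) t (A * Dk k (S m) t)).
  { eapply der_eq; [|apply (der_mult (fun _ => A) (Dk k m)); [apply (is_derive_const (K:=R_AbsRing) (V:=R_NormedModule))|apply Dk_der; auto]].
    simpl. unfold zero; simpl. ring. }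
  assert (H2 : is_derive (fun t => t * Dk k (S m) t) t (Dk k (S m) t + t * Dk k (S (S m)) t)).
  { eapply der_eq; [|apply der_mult; [apply (is_derive_id (K:=R_AbsRing))|apply Dk_der; auto]].
    simpl. unfold one; simpl. ring. }
  assert (H3 : is_derive (fun t => INR m * Dk k m t) t (INR m * Dk k (S m) t)).
  { eapply der_eq; [|apply (der_mult (fun _ => INR m) (Dk k m)); [apply (is_derive_const (K:=R_AbsRing) (V:=R_NormedModule))|apply Dk_der; auto]].
    simpl. unfold zero; simpl. ring. }
  assert (H4 : is_derive (fun t => B * (t * Dk k (S m) t + INR m * Dk k m t)) t (B * (Dk k (S m) t + t * Dk k (S (S m)) t + INR m * Dk k (S m) t))).
  { eapply der_eq; [|apply (der_mult (fun _ => B)); [apply (is_derive_const (K:=R_AbsRing) (V:=R_NormedModule))|apply der_plus; [exact H2|exact H3]]].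
    simpl. unfold zero; simpl. ring. }
  assert (H5 : is_derive (fun t => C * cm m t) t (C * cm (S m) t)).
  { eapply der_eq; [|apply (der_mult (fun _ => C) (cm m)); [apply (is_derive_const (K:=R_AbsRing) (V:=R_NormedModule))|apply cm_der]].
    simpl. unfold zero; simpl. ring. }
  eapply der_eq; [|apply der_plus; [apply der_plus; [exact H1|exact H4]|exact H5]].
  rewrite S_INR. ring.
Qed.

Lemma step_eq k (Hk : (2 <= k)%nat) (Sm : Smooth k) m :
  forall t, -1 < t < 1 -> Derive_n (berg (S (S k))) m t = Fm k m t.
Proof.
  induction m as [|m IH]; intros t H.
  - change (Derive_n (berg (S (S k))) 0 t) with (berg (S (S k)) t). rewrite berg_SS by auto. unfold Fm, Dk. simpl.
    change (Derive (fun x : R => berg k x) t) with (Derive (berg k) t). ring.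
  - simpl. rewrite (Derive_ext_loc _ (Fm k m)).
    + apply is_derive_unique, Fm_der; auto.
    + eapply filter_imp; [|apply open_int; exact H]. intros y Hy. apply IH; auto.
Qed.

Lemma step_smooth k (Hk : (2 <= k)%nat) (Sm : Smooth k) : Smooth (S (S k)).
Proof.
  intros m t H. apply (ex_derive_ext_loc (Fm k m)).
  - eapply filter_imp; [|apply open_int; exact H]. intros y Hy. symmetry; apply step_eq; auto.
  - eexists; apply Fm_der; auto.
Qed.

Lemma Jge2 k (Hk : (2 <= k)%nat) : 2 <= INR k.
Proof. replace 2 with (INR 2) by (simpl; ring). apply le_INR; auto. Qed.

Lemma EE_step1 k m : EE2 (S (S k)) m = EE2 k m + 1.
Proof. unfold EE2. rewrite !S_INR. field. Qed.
Lemma EE_step2 k m : EE2 (S (S k)) m = EE2 k (S m).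
Proof. unfold EE2. rewrite !S_INR. field. Qed.
Lemma EE_pos k (Hk : (2 <= k)%nat) m : 0 < EE2 (S (S k)) m.
Proof. unfold EE2. rewrite !S_INR. pose proof (Jge2 k Hk). pose proof (pos_INR m). lra. Qed.

Lemma Lval_step k (Hk : (2 <= k)%nat) m : Lval (S (S k)) m = cB k * Lval k (S m).
Proof.
  unfold Lval, cB.
  replace ((INR (S (S k)) - 3) / 2 + INR m) with ((INR k - 3) / 2 + INR (S m)) by (rewrite !S_INR; field).
  replace (INR (S m) - 2) with (1 + (INR m - 2)) by (rewrite S_INR; ring).
  replace ((INR (S (S k)) - 1) / 2) with (1 + (INR k - 1) / 2) by (rewrite !S_INR; field).
  rewrite !Rpower_plus, !Rpower_1 by (try apply PI_RGT_0; lra).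
  rewrite !S_INR.
  assert (0 < Rpower PI ((INR k - 1) / 2)) by apply exp_pos.
  pose proof (Jge2 k Hk). pose proof PI_RGT_0.
  field. repeat split; lra.
Qed.

Lemma step_rewrite k (Hk : (2 <= k)%nat) (Sm : Smooth k) m t : -1 < t < 1 ->
  Rpower (1 - t ^ 2) (EE2 (S (S k)) m) * Derive_n (berg (S (S k))) m t =
  cA k * (Rpower (1 - t ^ 2) (EE2 k m + 1) * Dk k m t)
  + cB k * (t * (Rpower (1 - t ^ 2) (EE2 k (S m)) * Dk k (S m) t) + INR m * (Rpower (1 - t ^ 2) (EE2 k m + 1) * Dk k m t))
  + cC k * cm m t * Rpower (1 - t ^ 2) (EE2 (S (S k)) m).
Proof.
  intros H. rewrite step_eq by auto. unfold Fm.
  rewrite <- EE_step1, <- EE_step2. ring.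
Qed.

Lemma step_main k (Hk : (2 <= k)%nat) (Sm : Smooth k) m :
  MainR k (S m) -> MainL k (S m) -> AuxR k m -> AuxL k m ->
  MainR (S (S k)) m /\ MainL (S (S k)) m.
Proof.
  intros MR ML AR AL. split.
  - unfold MainR. eapply filterlim_ext_loc.
    { eapply filter_imp; [|apply ev_right_m1]. intros t Ht. symmetry; apply step_rewrite; auto. }
    apply (lim_eq _ (cA k * 0 + cB k * (-1 * 0 + INR m * 0) + cC k * cm m (-1) * 0)); [ring|].
    apply lim_plus; [apply lim_plus|].
    + apply lim_mult; [apply lim_const|exact AR].
    + apply lim_mult; [apply lim_const|]. apply lim_plus.
      * apply lim_mult; [apply lim_id_right|exact MR].
      * apply lim_mult; [apply lim_const|exact AR].
    + apply lim_mult; [apply lim_mult; [apply lim_const|apply cont_right, cm_cont]|].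
      exact (filterlim_comp _ _ _ (fun t => 1 - t ^ 2) (fun x => Rpower x (EE2 (S (S k)) m)) _ _ _ w_right_m1 (rpow_to0 _ (EE_pos k Hk m))).
  - unfold MainL. eapply filterlim_ext_loc.
    { eapply filter_imp; [|apply ev_left_1]. intros t Ht. symmetry; apply step_rewrite; auto. }
    apply (lim_eq _ (cA k * 0 + cB k * (1 * Lval k (S m) + INR m * 0) + cC k * cm m 1 * 0)).
    { rewrite Lval_step by auto. ring. }
    apply lim_plus; [apply lim_plus|].
    + apply lim_mult; [apply lim_const|exact AL].
    + apply lim_mult; [apply lim_const|]. apply lim_plus.
      * apply lim_mult; [apply lim_id_left|exact ML].
      * apply lim_mult; [apply lim_const|exact AL].
    + apply lim_mult; [apply lim_mult; [apply lim_const|apply cont_left, cm_cont]|].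
      exact (filterlim_comp _ _ _ (fun t => 1 - t ^ 2) (fun x => Rpower x (EE2 (S (S k)) m)) _ _ _ w_left_1 (rpow_to0 _ (EE_pos k Hk m))).
Qed.


Definition Q (j : nat) := Smooth j /\ (forall m, AuxR j m /\ AuxL j m) /\
  (forall m, ~ ((j = 2%nat \/ j = 3%nat) /\ m = 0%nat) -> MainR j m /\ MainL j m).

Lemma Q2 : Q 2.
Proof.
  split; [apply smooth2|split].
  - intros [|n]; [apply aux20|]. destruct (main2 n). split; [apply auxR_of_main|apply auxL_of_main]; auto.
  - intros [|n] Hn; [exfalso; apply Hn; auto|]. apply main2.
Qed.

Lemma Q3 : Q 3.
Proof.
  split; [apply smooth3|split].
  - intros [|n]; [apply aux30|]. destruct (main3 n). split; [apply auxR_of_main|apply auxL_of_main]; auto.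
  - intros [|n] Hn; [exfalso; apply Hn; auto|]. apply main3.
Qed.

Lemma Q_step k : (2 <= k)%nat -> Q k -> Q (S (S k)).
Proof.
  intros Hk [Sm [Ax Mn]].
  assert (HM : forall m, MainR (S (S k)) m /\ MainL (S (S k)) m).
  { intros m. destruct (Ax m) as [AR AL].
    destruct (Mn (S m)) as [MR ML]; [intros [_ H]; discriminate|].
    apply step_main; auto. }
  split; [apply step_smooth; auto|split].
  - intros m. destruct (HM m). split; [apply auxR_of_main|apply auxL_of_main]; auto.
  - intros m _. apply HM.
Qed.

Lemma Q_all n : Q (n + 2) /\ Q (n + 3).
Proof.
  induction n as [|n [IH1 IH2]].
  - split; [apply Q2|apply Q3].
  - split.
    + replace (S n + 2)%nat with (n + 3)%nat by lia. auto.
    + replace (S n + 3)%nat with (S (S (n + 2))) by lia. apply Q_step; [lia|auto].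
Qed.

Theorem lemma4p3 (j m : nat) :
  (2 <= j)%nat ->
  ~ ((j = 2%nat \/ j = 3%nat) /\ m = 0%nat) ->
  filterlim
    (fun t => Rpower (1 - t ^ 2) ((INR j - 3) / 2 + INR m) * Derive_n (berg j) m t)
    (at_right (-1)) (locally 0)
  /\
  filterlim
    (fun t => Rpower (1 - t ^ 2) ((INR j - 3) / 2 + INR m) * Derive_n (berg j) m t)
    (at_left 1)
    (locally (- (INR j - 1) * Rpower 2 (INR m - 2)
              * Gamma ((INR j - 3) / 2 + INR m) / Rpower PI ((INR j - 1) / 2))).
Proof.
  intros Hj Hn.
  assert (HQ : Q j).
  { assert (Hq := proj1 (Q_all (j - 2))). replace (j - 2 + 2)%nat with j in Hq by lia. exact Hq. }
  destruct HQ as [_ [_ Mn]]. exact (Mn m Hn).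
Qed.
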